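(* Let $g_1,g_2$ be holomorphic functions on a domain $\mathcal{D}\subset\mathbb{C}$ with $g_1'g_2'\neq 0$ on $\mathcal{D}$, let $\sqrt{g_1'g_2'}$ be a holomorphic branch of the square root on $\mathcal{D}$, and define $\Phi=(\phi_1,\phi_2,\phi_3,\phi_4):\mathcal{D}\to\mathbb{C}^4$ by $$\phi_1=\frac{\mathrm{i}}{2}\frac{g_1g_2+1}{\sqrt{g_1'g_2'}},\quad \phi_2=\frac12\frac{g_1g_2-1}{\sqrt{g_1'g_2'}},\quad \phi_3=\frac12\frac{g_1+g_2}{\sqrt{g_1'g_2'}},\quad \phi_4=\frac{\mathrm{i}}{2}\frac{g_1-g_2}{\sqrt{g_1'g_2'}}.$$ Let $\Psi$ be a holomorphic function on $\mathcal{D}$ with $\Psi'=\Phi$ and set $\mathrm{x}(u,v)=\operatorname{Re}\Psi(u+\mathrm{i}v)$. Then $\mathrm{x}$ defines a minimal surface of general type in $\mathbb{R}^4$, and $(u,v)$ are canonical coordinates of the first type on it.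
   Context: A minimal surface in $\mathbb{R}^4$ is a regular surface with zero mean curvature vector. With $E=\mathrm{x}_u^2$, $X_1=\mathrm{x}_u/\|\mathrm{x}_u\|$, $X_2=\mathrm{x}_v/\|\mathrm{x}_v\|$ and second fundamental form $\sigma$: a point is superconformal if $\sigma(X_1,X_1)\perp\sigma(X_1,X_2)$ and $\|\sigma(X_1,X_1)\|=\|\sigma(X_1,X_2)\|$ there; a minimal surface is of general type if it has no superconformal points. Isothermal coordinates $(u,v)$ ($E=G$, $F=0$) are canonical of the first type if $\sigma(X_1,X_1)\perp\sigma(X_1,X_2)$ and $E^2(\|\sigma(X_1,X_1)\|^2-\|\sigma(X_1,X_2)\|^2)=1$. *)

(* Defs.v *)
From Stdlib Require Import Reals.
From Coquelicot Require Import Coquelicot.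
Open Scope R_scope.

Definition is_C_deriv (f : C -> C) (z l : C) : Prop :=
  @is_derive C_AbsRing C_NormedModule f z l.

Definition holo_on (D : C -> Prop) (f : C -> C) : Prop :=
  forall z, D z -> exists l, is_C_deriv f z l.

Definition is_domain (D : C -> Prop) : Prop :=
  open D /\ (exists z, D z) /\
  (forall U V : C -> Prop, open U -> open V ->
     (forall z, D z -> U z \/ V z) ->
     (forall z, D z -> ~ (U z /\ V z)) ->
     (forall z, D z -> U z) \/ (forall z, D z -> V z)).

(* the Weierstrass-type data Phi = (phi_1,...,phi_4), indexed 0..3;
   s plays the role of the chosen branch of sqrt(g1' g2') *)
Definition Phi (g1 g2 s : C -> C) (k : nat) (z : C) : C :=
  match k with
  | 0%nat => (Ci / 2 * ((g1 z * g2 z + 1) / s z))%C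
  | 1%nat => (/ 2 * ((g1 z * g2 z - 1) / s z))%C
  | 2%nat => (/ 2 * ((g1 z + g2 z) / s z))%C
  | 3%nat => (Ci / 2 * ((g1 z - g2 z) / s z))%C
  | _ => 0%C
  end.

(* vectors of R^4 are functions nat -> R, only coordinates 0..3 matter *)
Definition vec4 := nat -> R.
Definition dot (a b : vec4) : R :=
  a 0%nat * b 0%nat + a 1%nat * b 1%nat + a 2%nat * b 2%nat + a 3%nat * b 3%nat.

Definition surf := R -> R -> vec4.

Definition xu (x : surf) (u v : R) : vec4 := fun k => Derive (fun t => x t v k) u.
Definition xv (x : surf) (u v : R) : vec4 := fun k => Derive (fun t => x u t k) v.
Definition xuu (x : surf) (u v : R) : vec4 := fun k => Derive (fun t => xu x t v k) u.
Definition xuv (x : surf) (u v : R) : vec4 := fun k => Derive (fun t => xu x u t k) v.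
Definition xvv (x : surf) (u v : R) : vec4 := fun k => Derive (fun t => xv x u t k) v.

Definition EE (x : surf) u v := dot (xu x u v) (xu x u v).
Definition FF (x : surf) u v := dot (xu x u v) (xv x u v).
Definition GG (x : surf) u v := dot (xv x u v) (xv x u v).

(* orthogonal projection onto the normal space (orthogonal complement of
   span{x_u, x_v}); tangential coefficients obtained from the Gram matrix *)
Definition nperp (x : surf) (u v : R) (w : vec4) : vec4 :=
  let E := EE x u v in let F := FF x u v in let G := GG x u v in
  let a := (G * dot w (xu x u v) - F * dot w (xv x u v)) / (E * G - F * F) in
  let b := (E * dot w (xv x u v) - F * dot w (xu x u v)) / (E * G - F * F) in
  fun k => w k - a * xu x u v k - b * xv x u v k.

(* second fundamental form on coordinate fields: sigma(d_i,d_j) = (x_ij)^perp *)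
Definition sig_uu x u v := nperp x u v (xuu x u v).
Definition sig_uv x u v := nperp x u v (xuv x u v).
Definition sig_vv x u v := nperp x u v (xvv x u v).

(* sigma(X1,X1), sigma(X1,X2) with X1 = x_u/|x_u|, X2 = x_v/|x_v| *)
Definition sigma11 (x : surf) u v : vec4 :=
  fun k => sig_uu x u v k / EE x u v.
Definition sigma12 (x : surf) u v : vec4 :=
  fun k => sig_uv x u v k / (sqrt (EE x u v) * sqrt (GG x u v)).

(* mean curvature vector H = 1/2 g^{ij} sigma(d_i,d_j) *)
Definition meanH (x : surf) u v : vec4 :=
  let E := EE x u v in let F := FF x u v in let G := GG x u v in
  fun k => / 2 * (G * sig_uu x u v k - 2 * F * sig_uv x u v k + E * sig_vv x u v k)
           / (E * G - F * F).

Definition regular_surface (x : surf) (U : R -> R -> Prop) : Prop :=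
  open (fun p : R * R => U (fst p) (snd p)) /\
  forall u v, U u v ->
    (forall k, (k < 4)%nat ->
       ex_derive (fun t => x t v k) u /\ ex_derive (fun t => x u t k) v /\
       ex_derive (fun t => xu x t v k) u /\ ex_derive (fun t => xu x u t k) v /\
       ex_derive (fun t => xv x t v k) u /\ ex_derive (fun t => xv x u t k) v) /\
    (forall a b : R,
       (forall k, (k < 4)%nat -> a * xu x u v k + b * xv x u v k = 0) ->
       a = 0 /\ b = 0).

Definition minimal_surface (x : surf) (U : R -> R -> Prop) : Prop :=
  regular_surface x U /\
  forall u v, U u v -> forall k, (k < 4)%nat -> meanH x u v k = 0.

Definition superconformal (x : surf) (u v : R) : Prop :=
  dot (sigma11 x u v) (sigma12 x u v) = 0 /\
  sqrt (dot (sigma11 x u v) (sigma11 x u v)) = sqrt (dot (sigma12 x u v) (sigma12 x u v)).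

Definition general_type (x : surf) (U : R -> R -> Prop) : Prop :=
  minimal_surface x U /\ forall u v, U u v -> ~ superconformal x u v.

Definition canonical_first_type (x : surf) (U : R -> R -> Prop) : Prop :=
  forall u v, U u v ->
    EE x u v = GG x u v /\ FF x u v = 0 /\
    dot (sigma11 x u v) (sigma12 x u v) = 0 /\
    EE x u v ^ 2 * (dot (sigma11 x u v) (sigma11 x u v)
                    - dot (sigma12 x u v) (sigma12 x u v)) = 1.

(* Main.v *)
Require Import Defs.
From Stdlib Require Import Reals Lra Psatz Lia.
From Coquelicot Require Import Coquelicot.
Open Scope R_scope.

Lemma Cd_inv (y0 : C) : y0 <> 0%C -> is_C_deriv Cinv y0 (- / (y0 * y0))%C.
Proof.
  intros Hy0. unfold is_C_deriv, is_derive, filterdiff. split.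
  { apply is_linear_scal_l. }
  intros x Hx. pose proof (@is_filter_lim_locally_unique C_AbsRing (AbsRing_NormedModule C_AbsRing) y0 x Hx) as Hx2. subst x.
  intros eps.
  assert (Hm : 0 < Cmod y0) by (apply Cmod_gt_0; auto).
  set (m := Cmod y0) in *.
  assert (Hd : 0 < Rmin (m/2) (eps * m^3 / 2)).
  { apply Rmin_pos. lra. apply Rmult_lt_0_compat. apply Rmult_lt_0_compat. apply cond_pos. apply pow_lt; lra. lra. }
  exists (mkposreal _ Hd). intros y Hy.
  change (Cmod (y - y0)%C < Rmin (m / 2) (eps * m ^ 3 / 2)) in Hy.
  change (Cmod ((/ y - / y0) - (y - y0) * (- / (y0 * y0)))%C <= eps * Cmod (y - y0)%C).
  set (h := Cmod (y - y0)%C) in *.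
  assert (Hh1 : h < m/2) by (eapply Rlt_le_trans; [exact Hy| apply Rmin_l]).
  assert (Hh2 : h < eps * m^3/2) by (eapply Rlt_le_trans; [exact Hy| apply Rmin_r]).
  assert (Hy1 : m/2 <= Cmod y).
  { assert (m <= Cmod y + h).
    { unfold m, h. replace y0 with (y - (y - y0))%C at 1 by ring.
      eapply Rle_trans. apply Cmod_triangle. rewrite Cmod_opp. lra. }
    lra. }
  assert (Hyn : (y:C) <> 0%C).
  { intro E. rewrite E, Cmod_0 in Hy1. lra. }
  replace ((/ y - / y0) - (y - y0) * (- / (y0 * y0)))%C
    with ((y - y0) * (y - y0) * / y * / y0 * / y0)%C by (field; auto).
  rewrite !Cmod_mult, !Cmod_inv by auto. fold h m.
  assert (0 <= h) by apply Cmod_ge_0.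
  assert (Hk : / Cmod y <= 2 / m).
  { apply Rle_trans with (/ (m/2)). apply Rinv_le_contravar; lra. right; field; lra. }
  apply Rle_trans with (h * h * (2 / m) * / m * / m).
  { apply Rmult_le_compat_r. left; apply Rinv_0_lt_compat; lra.
    apply Rmult_le_compat_r. left; apply Rinv_0_lt_compat; lra.
    apply Rmult_le_compat_l. nra. exact Hk. }
  replace (h * h * (2 / m) * / m * / m) with (h * (2 * h / m^3)) by (field; lra).
  rewrite (Rmult_comm (pos eps)). apply Rmult_le_compat_l. auto.
  apply Rle_trans with (2 * (eps * m^3/2) / m^3).
  { unfold Rdiv. apply Rmult_le_compat_r. left; apply Rinv_0_lt_compat, pow_lt; lra. lra. }
  right. field. lra.
Qed.
Lemma conv f z l : is_C_deriv f z l <-> @is_derive C_AbsRing (AbsRing_NormedModule C_AbsRing) f z l.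
Proof. unfold is_C_deriv, is_derive, filterdiff. split; intros [_ H]; split; try apply is_linear_scal_l; exact H. Qed.

Lemma Cd_ext (f g : C -> C) z l l' : (forall y, f y = g y) -> l = l' -> is_C_deriv f z l -> is_C_deriv g z l'.
Proof. intros H1 H2 H3. subst. eapply is_derive_ext; eauto. Qed.

Lemma Cd_mult f g z df dg : is_C_deriv f z df -> is_C_deriv g z dg ->
  is_C_deriv (fun y => (f y * g y)%C) z (df * g z + f z * dg)%C.
Proof. intros H1 H2. apply conv. apply conv in H1. apply conv in H2. exact (@is_derive_mult C_AbsRing f g z df dg H1 H2 Cmult_comm). Qed.

Lemma Cd_plus f g z df dg : is_C_deriv f z df -> is_C_deriv g z dg ->
  is_C_deriv (fun y => (f y + g y)%C) z (df + dg)%C.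
Proof. intros H1 H2. exact (is_derive_plus f g z df dg H1 H2). Qed.

Lemma Cd_minus f g z df dg : is_C_deriv f z df -> is_C_deriv g z dg ->
  is_C_deriv (fun y => (f y - g y)%C) z (df - dg)%C.
Proof. intros H1 H2. exact (is_derive_minus f g z df dg H1 H2). Qed.

Lemma Cd_const (c : C) z : is_C_deriv (fun _ => c) z 0%C.
Proof. exact (@is_derive_const C_AbsRing C_NormedModule c z). Qed.

Lemma Cd_inv_comp f z df : is_C_deriv f z df -> f z <> 0%C ->
  is_C_deriv (fun y => / f y)%C z (- df / (f z * f z))%C.
Proof.
  intros H1 H2. pose proof (is_derive_comp Cinv f z _ df (Cd_inv _ H2) (proj1 (conv _ _ _) H1)) as H.
  eapply Cd_ext; [ | | exact H]. reflexivity. simpl. change (df * (- / (f z * f z)) = - df / (f z * f z))%C.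
  unfold Cdiv. ring.
Qed.

Lemma Cd_quot (c : C) N s z dN ds : is_C_deriv N z dN -> is_C_deriv s z ds -> s z <> 0%C ->
  is_C_deriv (fun y => c * (N y / s y))%C z (c * ((dN * s z - N z * ds) / (s z * s z)))%C.
Proof.
  intros HN Hs Hz.
  pose proof (Cd_mult _ _ _ _ _ (Cd_const c z) (Cd_mult _ _ _ _ _ HN (Cd_inv_comp _ _ _ Hs Hz))) as H.
  eapply Cd_ext; [ | | exact H]. intros; reflexivity. cbv beta. field. auto.
Qed.

Lemma ball_C (z y : C) (e : R) : Cmod (y - z)%C < e -> @ball (AbsRing_UniformSpace C_AbsRing) z e y.
Proof.
  intros H. unfold ball. simpl. unfold AbsRing_ball. exact H. Qed.

Lemma partial_gen (f : C -> C) (z l : C) (p : R -> C) (t0 : R) (d : C) (pr : C -> R) :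
  is_C_deriv f z l -> p t0 = z -> (forall t, (p t - z = RtoC (t - t0) * d)%C) -> Cmod d = 1 ->
  (forall a b, pr (a - b)%C = pr a - pr b) -> (forall (r:R) w, pr (RtoC r * w)%C = r * pr w) ->
  (forall w, Rabs (pr w) <= Cmod w) ->
  is_derive (fun t => pr (f (p t))) t0 (pr (d * l)%C).
Proof.
  intros Hf Hp Hpz Hd Hsub Hsc Hab.
  apply is_derive_Reals. intros eps Heps.
  destruct Hf as [_ Hf].
  assert (He2 : 0 < eps / 2) by lra.
  specialize (Hf z (fun P (HP : @locally (AbsRing_UniformSpace C_AbsRing) z P) => HP) (mkposreal _ He2)).
  destruct Hf as [del Hdel].
  exists del. intros h Hh0 Hhd.
  assert (Hy : Cmod (p (t0 + h)%R - z)%C = Rabs h).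
  { rewrite Hpz, Cmod_mult, Hd, Cmod_R, Rmult_1_r. f_equal; ring. }
  specialize (Hdel (p (t0 + h)%R)).
  assert (Hb : @ball (AbsRing_UniformSpace C_AbsRing) z del (p (t0 + h)%R)).
  { apply ball_C. rewrite Hy. exact Hhd. }
  specialize (Hdel Hb). simpl in Hdel.
  change (Cmod ((f (p (t0 + h)%R) - f z) - (p (t0 + h)%R - z) * l)%C <= eps / 2 * Cmod (p (t0 + h)%R - z)%C) in Hdel.
  rewrite Hy in Hdel. rewrite Hpz in Hdel.
  replace ((t0 + h - t0)) with h in Hdel by ring.
  pose proof (Hab ((f (p (t0 + h)%R) - f z) - RtoC h * d * l)%C) as Hab2.
  replace ((f (p (t0 + h)%R) - f z) - RtoC h * d * l)%C with ((f (p (t0 + h)%R) - f z) - RtoC h * (d * l))%C in Hab2 by ring.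
  rewrite Hsub, Hsub, Hsc in Hab2. rewrite Hp.
  replace ((pr (f (p (t0 + h)%R)) - pr (f z)) / h - pr (d * l)%C)
    with ((pr (f (p (t0 + h)%R)) - pr (f z) - h * pr (d * l)%C) / h) by (field; auto).
  unfold Rdiv. rewrite Rabs_mult, Rabs_inv.
  assert (0 < Rabs h) by (apply Rabs_pos_lt; auto).
  apply Rmult_lt_reg_r with (Rabs h). auto. rewrite Rmult_assoc, Rinv_l by lra.

  rewrite <- Cmult_assoc in Hdel. eapply Rle_lt_trans. rewrite Rmult_1_r. exact (Rle_trans _ _ _ Hab2 Hdel). nra.
Qed.

Lemma pr_Re_sub a b : Re (a - b)%C = Re a - Re b. Proof. destruct a, b. simpl. ring. Qed.
Lemma pr_Im_sub a b : Im (a - b)%C = Im a - Im b. Proof. destruct a, b. simpl. ring. Qed.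
Lemma pr_Re_sc (r:R) w : Re (RtoC r * w)%C = r * Re w. Proof. destruct w. simpl. ring. Qed.
Lemma pr_Im_sc (r:R) w : Im (RtoC r * w)%C = r * Im w. Proof. destruct w. simpl. ring. Qed.
Lemma pr_Im_le w : Rabs (Im w) <= Cmod w. Proof. eapply Rle_trans; [apply Rmax_r| apply Rmax_Cmod]. Qed.

Lemma partial_u (f : C -> C) (u v : R) l : is_C_deriv f (u,v) l ->
  is_derive (fun t => Re (f (t, v))) u (Re l) /\ is_derive (fun t => Im (f (t,v))) u (Im l).
Proof.
  intros H. 
  assert (Hp : forall t, ((t, v) - (u, v) = RtoC (t - u) * 1)%C).
  { intros t. apply injective_projections; simpl; ring. }
  split.
  - pose proof (partial_gen f (u,v) l (fun t => (t,v)) u 1%C Re H eq_refl Hp Cmod_1 pr_Re_sub pr_Re_sc re_le_Cmod) as K.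
    replace (Re l) with (Re (1 * l)%C) by (f_equal; ring). exact K.
  - pose proof (partial_gen f (u,v) l (fun t => (t,v)) u 1%C Im H eq_refl Hp Cmod_1 pr_Im_sub pr_Im_sc pr_Im_le) as K.
    replace (Im l) with (Im (1 * l)%C) by (f_equal; ring). exact K.
Qed.

Lemma partial_v (f : C -> C) (u v : R) l : is_C_deriv f (u,v) l ->
  is_derive (fun t => Re (f (u, t))) v (- Im l) /\ is_derive (fun t => Im (f (u,t))) v (Re l).
Proof.
  intros H. 
  assert (Hp : forall t, ((u, t) - (u, v) = RtoC (t - v) * Ci)%C).
  { intros t. apply injective_projections; simpl; ring. }
  split.
  - pose proof (partial_gen f (u,v) l (fun t => (u,t)) v Ci Re H eq_refl Hp Cmod_Ci pr_Re_sub pr_Re_sc re_le_Cmod) as K.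
    replace (- Im l) with (Re (Ci * l)%C) by (destruct l; simpl; ring). exact K.
  - pose proof (partial_gen f (u,v) l (fun t => (u,t)) v Ci Im H eq_refl Hp Cmod_Ci pr_Im_sub pr_Im_sc pr_Im_le) as K.
    replace (Re l) with (Im (Ci * l)%C) by (destruct l; simpl; ring). exact K.
Qed.

Lemma dot_ext (p q p' q' : vec4) : (forall k, (k < 4)%nat -> p k = p' k) -> (forall k, (k < 4)%nat -> q k = q' k) -> dot p q = dot p' q'.
Proof. intros H1 H2. unfold dot. rewrite !H1, !H2 by lia. reflexivity. Qed.

Lemma dot_sym p q : dot p q = dot q p. Proof. unfold dot; ring. Qed.
Lemma dot_self_ge0 p : 0 <= dot p p. Proof. unfold dot; nra. Qed.

Lemma np_dot (p q w1 w2 : vec4) e : dot p p = e -> dot q q = e -> dot p q = 0 -> e <> 0 ->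
 dot (fun k => w1 k - dot w1 p / e * p k - dot w1 q / e * q k)
     (fun k => w2 k - dot w2 p / e * p k - dot w2 q / e * q k)
 = dot w1 w2 - dot w1 p * dot w2 p / e - dot w1 q * dot w2 q / e.
Proof.
  intros Hp Hq Hpq He.
  set (r1 := dot w1 p / e). set (s1 := dot w1 q / e). set (r2 := dot w2 p / e). set (s2 := dot w2 q / e).
  transitivity (dot w1 w2 - r2 * dot w1 p - s2 * dot w1 q - r1 * dot p w2 + r1 * r2 * dot p p
     + r1 * s2 * dot p q - s1 * dot q w2 + s1 * r2 * dot q p + s1 * s2 * dot q q).
  { unfold dot. ring. }
  rewrite (dot_sym q p), (dot_sym p w2), (dot_sym q w2), Hp, Hq, Hpq. unfold r1, r2, s1, s2. field. auto.
Qed.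

Lemma final_alg (x : surf) u v (a b c d : vec4) :
  (forall k, (k < 4)%nat -> xu x u v k = a k) ->
  (forall k, (k < 4)%nat -> xv x u v k = - b k) ->
  (forall k, (k < 4)%nat -> xuu x u v k = c k) ->
  (forall k, (k < 4)%nat -> xuv x u v k = - d k) ->
  (forall k, (k < 4)%nat -> xvv x u v k = - c k) ->
  dot a a = dot b b -> dot a b = 0 -> dot a c - dot b d = 0 -> dot a d + dot b c = 0 ->
  dot c c - dot d d = 1 -> dot c d = 0 -> 0 < dot a a ->
  (EE x u v = GG x u v /\ FF x u v = 0 /\
    dot (sigma11 x u v) (sigma12 x u v) = 0 /\
    EE x u v ^ 2 * (dot (sigma11 x u v) (sigma11 x u v)
                    - dot (sigma12 x u v) (sigma12 x u v)) = 1) /\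
  (forall k, (k < 4)%nat -> meanH x u v k = 0) /\
  ~ superconformal x u v /\
  (forall al be : R,
       (forall k, (k < 4)%nat -> al * xu x u v k + be * xv x u v k = 0) ->
       al = 0 /\ be = 0).
Proof.
  intros Ha Hb Hc Hd Hcc Haabb Hab Hacbd Hadbc Hccdd Hcd He.
  set (e := dot a a) in *.
  set (U := xu x u v). set (V := xv x u v). set (Wuu := xuu x u v). set (Wuv := xuv x u v). set (Wvv := xvv x u v).
  assert (HUU : dot U U = e) by (apply dot_ext; auto).
  assert (HVV : dot V V = e).
  { rewrite (dot_ext V V (fun k => - b k) (fun k => - b k)) by auto. rewrite Haabb. unfold dot; ring. }
  assert (HUV : dot U V = 0).
  { rewrite (dot_ext U V a (fun k => - b k)) by auto. transitivity (- dot a b). unfold dot; ring. lra. }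
  assert (HEE : EE x u v = e) by exact HUU.
  assert (HGG : GG x u v = e) by exact HVV.
  assert (HFF : FF x u v = 0) by exact HUV.
  assert (Hne : e <> 0) by lra.
  assert (Hnp : forall w k, nperp x u v w k = w k - dot w U / e * U k - dot w V / e * V k).
  { intros w k. unfold nperp. rewrite HEE, HFF, HGG. fold U V. field. auto. }
  assert (HnpD : forall w1 w2, dot (nperp x u v w1) (nperp x u v w2) =
      dot w1 w2 - dot w1 U * dot w2 U / e - dot w1 V * dot w2 V / e).
  { intros w1 w2. rewrite <- np_dot with (p := U) (q := V) by auto. apply dot_ext; intros; apply Hnp. }
  assert (E1 : dot Wuu U = dot c a) by (apply dot_ext; auto).
  assert (E2 : dot Wuu V = - dot c b).
  { rewrite (dot_ext Wuu V c (fun k => - b k)) by auto. unfold dot; ring. }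
  assert (E3 : dot Wuv U = - dot d a).
  { rewrite (dot_ext Wuv U (fun k => - d k) a) by auto. unfold dot; ring. }
  assert (E4 : dot Wuv V = dot d b).
  { rewrite (dot_ext Wuv V (fun k => - d k) (fun k => - b k)) by auto. unfold dot; ring. }
  assert (E5 : dot Wuu Wuu = dot c c) by (apply dot_ext; auto).
  assert (E6 : dot Wuv Wuv = dot d d).
  { rewrite (dot_ext Wuv Wuv (fun k => - d k) (fun k => - d k)) by auto. unfold dot; ring. }
  assert (E7 : dot Wuu Wuv = - dot c d).
  { rewrite (dot_ext Wuu Wuv c (fun k => - d k)) by auto. unfold dot; ring. }
  assert (Hsq : sqrt (EE x u v) * sqrt (GG x u v) = e).
  { rewrite HEE, HGG. apply sqrt_sqrt. lra. }
  assert (S11 : forall w, dot (sigma11 x u v) w = dot (sig_uu x u v) w / e).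
  { intros w. unfold sigma11. rewrite HEE. unfold dot. field. auto. }
  assert (S12 : forall w, dot w (sigma12 x u v) = dot w (sig_uv x u v) / e).
  { intros w. unfold sigma12. rewrite Hsq. unfold dot. field. auto. }
  assert (S12' : dot (sigma12 x u v) (sigma12 x u v) = dot (sig_uv x u v) (sig_uv x u v) / e / e).
  { unfold sigma12. rewrite Hsq. unfold dot. field. auto. }
  assert (S11' : dot (sigma11 x u v) (sigma11 x u v) = dot (sig_uu x u v) (sig_uu x u v) / e / e).
  { unfold sigma11. rewrite HEE. unfold dot. field. auto. }
  assert (Hca : dot c a = dot a c) by apply dot_sym.
  assert (Hcb : dot c b = dot b c) by apply dot_sym.
  assert (Hda : dot d a = dot a d) by apply dot_sym.
  assert (Hdb : dot d b = dot b d) by apply dot_sym.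
  assert (Hcan : EE x u v = GG x u v /\ FF x u v = 0 /\
    dot (sigma11 x u v) (sigma12 x u v) = 0 /\
    EE x u v ^ 2 * (dot (sigma11 x u v) (sigma11 x u v)
                    - dot (sigma12 x u v) (sigma12 x u v)) = 1).
  { split. lra. split. exact HFF. split.
    - rewrite S11, S12. unfold sig_uu, sig_uv. rewrite HnpD. fold Wuu Wuv.
      rewrite E1, E2, E3, E4, E7.
      replace (dot d a) with (- dot c b) by lra. replace (dot d b) with (dot c a) by lra.
      rewrite Hcd. unfold Rdiv. ring.
    - rewrite S11', S12', HEE. unfold sig_uu, sig_uv. rewrite !HnpD. fold Wuu Wuv.
      rewrite E1, E2, E3, E4, E5, E6.
      replace (dot d a) with (- dot c b) by lra. replace (dot d b) with (dot c a) by lra.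
      field_simplify; [| auto]. replace (dot d d) with (dot c c - 1) by lra. field. auto. }
  split; [exact Hcan|]. split; [| split].
  - intros k Hk. unfold meanH. rewrite HEE, HFF, HGG. unfold sig_uu, sig_uv, sig_vv.
    rewrite !Hnp. fold Wuu Wvv.
    assert (Hv : Wvv k = - Wuu k) by (unfold Wvv, Wuu; rewrite Hcc, Hc by auto; ring).
    assert (HvU : dot Wvv U = - dot Wuu U).
    { rewrite (dot_ext Wvv U (fun k => - Wuu k) U). unfold dot; ring. intros; unfold Wvv, Wuu; rewrite Hcc, Hc by auto; ring. auto. }
    assert (HvV : dot Wvv V = - dot Wuu V).
    { rewrite (dot_ext Wvv V (fun k => - Wuu k) V). unfold dot; ring. intros; unfold Wvv, Wuu; rewrite Hcc, Hc by auto; ring. auto. }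
    rewrite Hv, HvU, HvV. field. auto.
  - intros [_ Hs]. destruct Hcan as [_ [_ [_ Hc1]]].
    apply sqrt_inj in Hs; try apply dot_self_ge0. rewrite Hs in Hc1. lra.
  - intros al be H.
    assert (H0 : dot U (fun k => al * U k + be * V k) = 0).
    { rewrite (dot_ext U (fun k => al * U k + be * V k) U (fun _ => 0)). unfold dot; ring. auto. intros; apply H; auto. }
    assert (H1 : dot V (fun k => al * U k + be * V k) = 0).
    { rewrite (dot_ext V (fun k => al * U k + be * V k) V (fun _ => 0)). unfold dot; ring. auto. intros; apply H; auto. }
    assert (K0 : dot U (fun k => al * U k + be * V k) = al * dot U U + be * dot U V) by (unfold dot; ring).
    assert (K1 : dot V (fun k => al * U k + be * V k) = al * dot U V + be * dot V V) by (unfold dot; ring).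
    rewrite HUU, HUV in K0. rewrite HUV, HVV in K1.
    split.
    + apply Rmult_eq_reg_r with e; auto. nra.
    + apply Rmult_eq_reg_r with e; auto. nra.
Qed.

Lemma Ci_sq : (Ci * Ci = - 1)%C.
Proof. apply injective_projections; simpl; ring. Qed.

Section Ids.
Variables G1 G2 D1 D2 S DS : C.
Hypothesis HS : S <> 0%C.
Let N0 := (G1 * G2 + 1)%C. Let N1 := (G1 * G2 - 1)%C. Let N2 := (G1 + G2)%C. Let N3 := (G1 - G2)%C.
Let M0 := (D1 * G2 + G1 * D2)%C. Let M1 := (D1 * G2 + G1 * D2)%C. Let M2 := (D1 + D2)%C. Let M3 := (D1 - D2)%C.
Let p0 := (Ci / 2 * (N0 / S))%C. Let p1 := (/ 2 * (N1 / S))%C. Let p2 := (/ 2 * (N2 / S))%C. Let p3 := (Ci / 2 * (N3 / S))%C.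
Let q0 := (Ci / 2 * ((M0 * S - N0 * DS) / (S * S)))%C.
Let q1 := (/ 2 * ((M1 * S - N1 * DS) / (S * S)))%C.
Let q2 := (/ 2 * ((M2 * S - N2 * DS) / (S * S)))%C.
Let q3 := (Ci / 2 * ((M3 * S - N3 * DS) / (S * S)))%C.

Lemma two_neq0 : (2 : C) <> 0%C.
Proof. intro H. apply (f_equal Re) in H. simpl in H. lra. Qed.

Lemma id_pp : (p0 * p0 + p1 * p1 + p2 * p2 + p3 * p3 = 0)%C.
Proof.
  pose proof two_neq0.
  transitivity ((Ci * Ci + 1) * ((N0 * N0 + N3 * N3) / (4 * S * S)))%C.
  { unfold p0, p1, p2, p3, N0, N1, N2, N3. field. auto. }
  rewrite Ci_sq. ring.
Qed.

Lemma id_pq : (p0 * q0 + p1 * q1 + p2 * q2 + p3 * q3 = 0)%C.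
Proof.
  pose proof two_neq0.
  transitivity ((Ci * Ci + 1) * ((N0 * (M0 * S - N0 * DS) + N3 * (M3 * S - N3 * DS)) / (4 * S * S * S)))%C.
  { unfold p0, p1, p2, p3, q0, q1, q2, q3, N0, N1, N2, N3, M0, M1, M2, M3. field. auto. }
  rewrite Ci_sq. ring.
Qed.

Lemma id_qq : (S * S = D1 * D2)%C -> (q0 * q0 + q1 * q1 + q2 * q2 + q3 * q3 = 1)%C.
Proof.
  intros HSS. pose proof two_neq0.
  transitivity ((Ci * Ci + 1) * (((M0 * S - N0 * DS) * (M0 * S - N0 * DS) + (M3 * S - N3 * DS) * (M3 * S - N3 * DS)) / (4 * S * S * S * S)) + D1 * D2 / (S * S))%C.
  { unfold q0, q1, q2, q3, N0, N1, N2, N3, M0, M1, M2, M3. field. auto. }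
  rewrite Ci_sq, <- HSS. field. auto.
Qed.

Lemma id_nz : p0 = 0%C -> p1 = 0%C -> False.
Proof.
  intros H0 H1. pose proof two_neq0.
  assert (E : ((2:C) = 2 * S * (- Ci) * p0 - 2 * S * p1)%C).
  { transitivity (- (Ci * Ci) * N0 - N1)%C.
    - rewrite Ci_sq. unfold N0, N1. ring.
    - unfold p0, p1. field. auto. }
  rewrite H0, H1 in E. apply H. rewrite E. ring.
Qed.
End Ids.

Definition cK (k : nat) : C := match k with 0%nat => (Ci / 2)%C | 1%nat => (/ 2)%C | 2%nat => (/ 2)%C | _ => (Ci / 2)%C end.
Definition NK (g1 g2 : C -> C) (k : nat) (z : C) : C :=
  match k with 0%nat => (g1 z * g2 z + 1)%C | 1%nat => (g1 z * g2 z - 1)%C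
  | 2%nat => (g1 z + g2 z)%C | _ => (g1 z - g2 z)%C end.
Definition MK (g1 g2 : C -> C) (k : nat) (z : C) : C :=
  match k with 0%nat => (C_derive g1 z * g2 z + g1 z * C_derive g2 z)%C
  | 1%nat => (C_derive g1 z * g2 z + g1 z * C_derive g2 z)%C
  | 2%nat => (C_derive g1 z + C_derive g2 z)%C | _ => (C_derive g1 z - C_derive g2 z)%C end.
Definition QK (g1 g2 s : C -> C) (k : nat) (z : C) : C :=
  (cK k * ((MK g1 g2 k z * s z - NK g1 g2 k z * C_derive s z) / (s z * s z)))%C.

Lemma Phi_eq g1 g2 s k z : (k < 4)%nat -> Phi g1 g2 s k z = (cK k * (NK g1 g2 k z / s z))%C.
Proof. intros Hk. destruct k as [|[|[|[|k]]]]; try reflexivity. lia. Qed.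

Lemma holo_deriv (D : C -> Prop) f z : holo_on D f -> D z -> is_C_deriv f z (C_derive f z).
Proof. intros H Hz. destruct (H z Hz) as [l Hl]. rewrite (is_C_derive_unique f z l Hl). exact Hl. Qed.

Lemma NK_deriv (D : C -> Prop) g1 g2 k z : holo_on D g1 -> holo_on D g2 -> D z -> (k < 4)%nat ->
  is_C_deriv (NK g1 g2 k) z (MK g1 g2 k z).
Proof.
  intros H1 H2 Hz Hk.
  pose proof (holo_deriv D g1 z H1 Hz) as K1. pose proof (holo_deriv D g2 z H2 Hz) as K2.
  destruct k as [|[|[|[|k]]]].
  - eapply Cd_ext; [| | exact (Cd_plus _ _ _ _ _ (Cd_mult _ _ _ _ _ K1 K2) (Cd_const 1 z))].
    reflexivity. unfold MK. rewrite Cplus_0_r. reflexivity.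
  - eapply Cd_ext; [| | exact (Cd_minus _ _ _ _ _ (Cd_mult _ _ _ _ _ K1 K2) (Cd_const 1 z))].
    reflexivity. unfold MK. unfold Cminus. rewrite Copp_0, Cplus_0_r. reflexivity.
  - eapply Cd_ext; [| | exact (Cd_plus _ _ _ _ _ K1 K2)]. reflexivity. reflexivity.
  - eapply Cd_ext; [| | exact (Cd_minus _ _ _ _ _ K1 K2)]. reflexivity. reflexivity.
  - lia.
Qed.

Lemma PhiD (D : C -> Prop) g1 g2 s k z : holo_on D g1 -> holo_on D g2 -> holo_on D s -> D z -> s z <> 0%C ->
  (k < 4)%nat -> is_C_deriv (Phi g1 g2 s k) z (QK g1 g2 s k z).
Proof.
  intros H1 H2 H3 Hz Hs Hk.
  eapply Cd_ext; [| reflexivity | exact (Cd_quot (cK k) (NK g1 g2 k) s z _ _ (NK_deriv D g1 g2 k z H1 H2 Hz Hk) (holo_deriv D s z H3 Hz) Hs)].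
  intros y. symmetry. apply Phi_eq. auto.
Qed.

Lemma sum4_re (p q : nat -> C) : Re (p 0%nat * q 0%nat + p 1%nat * q 1%nat + p 2%nat * q 2%nat + p 3%nat * q 3%nat)%C
  = dot (fun k => Re (p k)) (fun k => Re (q k)) - dot (fun k => Im (p k)) (fun k => Im (q k)).
Proof. unfold dot, Re, Im. simpl. ring. Qed.
Lemma sum4_im (p q : nat -> C) : Im (p 0%nat * q 0%nat + p 1%nat * q 1%nat + p 2%nat * q 2%nat + p 3%nat * q 3%nat)%C
  = dot (fun k => Re (p k)) (fun k => Im (q k)) + dot (fun k => Im (p k)) (fun k => Re (q k)).
Proof. unfold dot, Re, Im. simpl. ring. Qed.

Lemma slices (D : C -> Prop) u v : open D -> D (u, v) ->
  locally u (fun t => D (t, v)) /\ locally v (fun t => D (u, t)).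
Proof.
  intros Ho H. destruct (Ho (u, v) H) as [eps He]. split.
  - exists eps. intros t Ht. apply He. split; [exact Ht | apply ball_center].
  - exists eps. intros t Ht. apply He. split; [apply ball_center | exact Ht].
Qed.

Lemma point (D : C -> Prop) (g1 g2 s : C -> C) (Psi : nat -> C -> C) (x : surf) (u v : R) :
  open D ->
  holo_on D g1 -> holo_on D g2 ->
  (forall z, D z -> (C_derive g1 z * C_derive g2 z)%C <> 0%C) ->
  holo_on D s ->
  (forall z, D z -> (s z * s z)%C = (C_derive g1 z * C_derive g2 z)%C) ->
  (forall k z, (k < 4)%nat -> D z -> is_C_deriv (Psi k) z (Phi g1 g2 s k z)) ->
  (forall u v k, x u v k = Re (Psi k (u, v))) ->
  D (u, v) ->
  ((EE x u v = GG x u v /\ FF x u v = 0 /\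
    dot (sigma11 x u v) (sigma12 x u v) = 0 /\
    EE x u v ^ 2 * (dot (sigma11 x u v) (sigma11 x u v)
                    - dot (sigma12 x u v) (sigma12 x u v)) = 1) /\
  (forall k, (k < 4)%nat -> meanH x u v k = 0) /\
  ~ superconformal x u v /\
  (forall al be : R,
       (forall k, (k < 4)%nat -> al * xu x u v k + be * xv x u v k = 0) ->
       al = 0 /\ be = 0)) /\
  (forall k, (k < 4)%nat ->
       ex_derive (fun t => x t v k) u /\ ex_derive (fun t => x u t k) v /\
       ex_derive (fun t => xu x t v k) u /\ ex_derive (fun t => xu x u t k) v /\
       ex_derive (fun t => xv x t v k) u /\ ex_derive (fun t => xv x u t k) v).
Proof.
  intros Ho H1 H2 Hnz H3 Hss HPsi Hx Huv.
  set (z := (u, v)) in *.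
  assert (Hsz : s z <> 0%C).
  { intro E. apply (Hnz z Huv). rewrite <- (Hss z Huv), E. ring. }
  destruct (slices D u v Ho Huv) as [Lu Lv].
  assert (XU : forall t w k, D (t, w) -> (k < 4)%nat -> xu x t w k = Re (Phi g1 g2 s k (t, w))).
  { intros t w k Hd Hk. unfold xu.
    rewrite (Derive_ext _ (fun r => Re (Psi k (r, w)))) by (intros; apply Hx).
    apply is_derive_unique. exact (proj1 (partial_u _ _ _ _ (HPsi k (t, w) Hk Hd))). }
  assert (XV : forall t w k, D (t, w) -> (k < 4)%nat -> xv x t w k = - Im (Phi g1 g2 s k (t, w))).
  { intros t w k Hd Hk. unfold xv.
    rewrite (Derive_ext _ (fun r => Re (Psi k (t, r)))) by (intros; apply Hx).
    apply is_derive_unique. exact (proj1 (partial_v _ _ _ _ (HPsi k (t, w) Hk Hd))). }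
  assert (DUU : forall k, (k < 4)%nat -> is_derive (fun t => xu x t v k) u (Re (QK g1 g2 s k z))).
  { intros k Hk. apply is_derive_ext_loc with (f := fun t => Re (Phi g1 g2 s k (t, v))).
    - eapply filter_imp; [| exact Lu]. intros t Ht. symmetry. apply XU; auto.
    - exact (proj1 (partial_u _ _ _ _ (PhiD D g1 g2 s k z H1 H2 H3 Huv Hsz Hk))). }
  assert (DUV : forall k, (k < 4)%nat -> is_derive (fun t => xu x u t k) v (- Im (QK g1 g2 s k z))).
  { intros k Hk. apply is_derive_ext_loc with (f := fun t => Re (Phi g1 g2 s k (u, t))).
    - eapply filter_imp; [| exact Lv]. intros t Ht. symmetry. apply XU; auto.
    - exact (proj1 (partial_v _ _ _ _ (PhiD D g1 g2 s k z H1 H2 H3 Huv Hsz Hk))). }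
  assert (DVU : forall k, (k < 4)%nat -> is_derive (fun t => xv x t v k) u (- Im (QK g1 g2 s k z))).
  { intros k Hk. apply is_derive_ext_loc with (f := fun t => - Im (Phi g1 g2 s k (t, v))).
    - eapply filter_imp; [| exact Lu]. intros t Ht. symmetry. apply XV; auto.
    - apply (@is_derive_opp R_AbsRing R_NormedModule (fun t => Im (Phi g1 g2 s k (t, v)))).
      exact (proj2 (partial_u _ _ _ _ (PhiD D g1 g2 s k z H1 H2 H3 Huv Hsz Hk))). }
  assert (DVV : forall k, (k < 4)%nat -> is_derive (fun t => xv x u t k) v (- Re (QK g1 g2 s k z))).
  { intros k Hk. apply is_derive_ext_loc with (f := fun t => - Im (Phi g1 g2 s k (u, t))).
    - eapply filter_imp; [| exact Lv]. intros t Ht. symmetry. apply XV; auto.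
    - apply (@is_derive_opp R_AbsRing R_NormedModule (fun t => Im (Phi g1 g2 s k (u, t)))).
      exact (proj2 (partial_v _ _ _ _ (PhiD D g1 g2 s k z H1 H2 H3 Huv Hsz Hk))). }
  split.
  2:{ intros k Hk. repeat split.
    - exists (Re (Phi g1 g2 s k z)).
      eapply is_derive_ext; [| exact (proj1 (partial_u _ _ _ _ (HPsi k z Hk Huv)))]. intros; simpl; symmetry; apply Hx.
    - exists (- Im (Phi g1 g2 s k z)).
      eapply is_derive_ext; [| exact (proj1 (partial_v _ _ _ _ (HPsi k z Hk Huv)))]. intros; simpl; symmetry; apply Hx.
    - eexists; apply DUU; auto.
    - eexists; apply DUV; auto.
    - eexists; apply DVU; auto.
    - eexists; apply DVV; auto. }
  pose (a := fun k => Re (Phi g1 g2 s k z)). pose (b := fun k => Im (Phi g1 g2 s k z)).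
  pose (c := fun k => Re (QK g1 g2 s k z)). pose (d := fun k => Im (QK g1 g2 s k z)).
  pose proof (id_pp (g1 z) (g2 z) (s z) Hsz) as I1.
  pose proof (id_pq (g1 z) (g2 z) (C_derive g1 z) (C_derive g2 z) (s z) (C_derive s z) Hsz) as I2.
  pose proof (id_qq (g1 z) (g2 z) (C_derive g1 z) (C_derive g2 z) (s z) (C_derive s z) Hsz (Hss z Huv)) as I3.
  pose proof (sum4_re (fun k => Phi g1 g2 s k z) (fun k => Phi g1 g2 s k z)) as R1.
  pose proof (sum4_im (fun k => Phi g1 g2 s k z) (fun k => Phi g1 g2 s k z)) as J1.
  pose proof (sum4_re (fun k => Phi g1 g2 s k z) (fun k => QK g1 g2 s k z)) as R2.
  pose proof (sum4_im (fun k => Phi g1 g2 s k z) (fun k => QK g1 g2 s k z)) as J2.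
  pose proof (sum4_re (fun k => QK g1 g2 s k z) (fun k => QK g1 g2 s k z)) as R3.
  pose proof (sum4_im (fun k => QK g1 g2 s k z) (fun k => QK g1 g2 s k z)) as J3.
  cbv beta in R1, J1, R2, J2, R3, J3.
  change (Phi g1 g2 s 0 z * Phi g1 g2 s 0 z + Phi g1 g2 s 1 z * Phi g1 g2 s 1 z + Phi g1 g2 s 2 z * Phi g1 g2 s 2 z + Phi g1 g2 s 3 z * Phi g1 g2 s 3 z = 0)%C in I1.
  change (Phi g1 g2 s 0 z * QK g1 g2 s 0 z + Phi g1 g2 s 1 z * QK g1 g2 s 1 z + Phi g1 g2 s 2 z * QK g1 g2 s 2 z + Phi g1 g2 s 3 z * QK g1 g2 s 3 z = 0)%C in I2.
  change (QK g1 g2 s 0 z * QK g1 g2 s 0 z + QK g1 g2 s 1 z * QK g1 g2 s 1 z + QK g1 g2 s 2 z * QK g1 g2 s 2 z + QK g1 g2 s 3 z * QK g1 g2 s 3 z = 1)%C in I3.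
  rewrite I1 in R1, J1. rewrite I2 in R2, J2. rewrite I3 in R3, J3.
  assert (Re0 : Re 0%C = 0) by reflexivity. assert (Im0 : Im 0%C = 0) by reflexivity.
  assert (Re1 : Re 1%C = 1) by reflexivity. assert (Im1 : Im 1%C = 0) by reflexivity.
  rewrite ?Re0, ?Im0, ?Re1, ?Im1 in R1, J1, R2, J2, R3, J3.
  fold a b c d in R1, J1, R2, J2, R3, J3.
  assert (Hba : dot b a = dot a b) by apply dot_sym.
  assert (Hdc : dot d c = dot c d) by apply dot_sym.
  apply (final_alg x u v a b c d).
  - intros k Hk. apply XU; auto.
  - intros k Hk. apply XV; auto.
  - intros k Hk. apply is_derive_unique. apply DUU; auto.
  - intros k Hk. apply is_derive_unique. apply DUV; auto.
  - intros k Hk. apply is_derive_unique. apply DVV; auto.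
  - lra.
  - lra.
  - lra.
  - lra.
  - lra.
  - lra.
  - destruct (Rle_lt_or_eq_dec 0 (dot a a) (dot_self_ge0 a)) as [Hp | Hp]; [exact Hp |].
    exfalso.
    assert (Hbb : dot b b = 0) by lra.
    unfold dot in Hp, Hbb.
    assert (a 0%nat = 0 /\ a 1%nat = 0) as [A0 A1] by (split; nra).
    assert (b 0%nat = 0 /\ b 1%nat = 0) as [B0 B1] by (split; nra).
    apply (id_nz (g1 z) (g2 z) (s z) Hsz).
    + change (Phi g1 g2 s 0 z = 0%C). apply injective_projections; [exact A0 | exact B0].
    + change (Phi g1 g2 s 1 z = 0%C). apply injective_projections; [exact A1 | exact B1].
Qed.

Theorem mainTheorem4 (D : C -> Prop) (g1 g2 s : C -> C) (Psi : nat -> C -> C) :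
  is_domain D ->
  holo_on D g1 -> holo_on D g2 ->
  (forall z, D z -> (C_derive g1 z * C_derive g2 z)%C <> 0%C) ->
  holo_on D s ->
  (forall z, D z -> (s z * s z)%C = (C_derive g1 z * C_derive g2 z)%C) ->
  (forall k z, (k < 4)%nat -> D z -> is_C_deriv (Psi k) z (Phi g1 g2 s k z)) ->
  let x : surf := fun u v k => Re (Psi k (u, v)) in
  general_type x (fun u v => D (u, v)) /\
  canonical_first_type x (fun u v => D (u, v)).
Proof.
  intros HD H1 H2 Hnz H3 Hss HPsi x.
  destruct HD as [Ho _].
  assert (Hx : forall u v k, x u v k = Re (Psi k (u, v))) by reflexivity.
  pose proof (fun u v Huv => point D g1 g2 s Psi x u v Ho H1 H2 Hnz H3 Hss HPsi Hx Huv) as P.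
  split; [split; [split; [split|] |] |].
  - intros [a b] Hab. destruct (Ho (a, b) Hab) as [eps He]. exists eps. intros [c d] Hcd. exact (He (c, d) Hcd).
  - intros u v Huv. destruct (P u v Huv) as [[_ [_ [_ Hi]]] Hd]. split; [exact Hd | exact Hi].
  - intros u v Huv. exact (proj1 (proj2 (proj1 (P u v Huv)))).
  - intros u v Huv. exact (proj1 (proj2 (proj2 (proj1 (P u v Huv))))).
  - intros u v Huv. exact (proj1 (proj1 (P u v Huv))).
Qed.
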